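(* Let $K$ be a field, $c\in K\setminus\{0\}$, $n\ge 1$, and let $f$ be a $c$-frieze of order $n$ over $K$. Put $s=f(0,n)$ and $t=f(1,n+1)$. Let $k$ be an integer with $-1\le k\le n+2$. (a) If $k$ is even, then for all $i\in\mathbb{Z}$: $f(2i,2i+k-1)=f(2i+n+3,2i+k+n+2)$ and $f(2i+1,2i+k)=f(2i+n+4,2i+k+n+3)$. (b) If $k$ is odd, then for all $i\in\mathbb{Z}$: $f(2i,2i+k-1)=\frac{(-c)^{n+1}}{t^2}f(2i+n+3,2i+k+n+2)$ and $f(2i+1,2i+k)=\frac{(-c)^{n+1}}{s^2}f(2i+n+4,2i+k+n+3)$. Furthermore, if $k$ is odd and $n$ is even, then $f(i,i+k-1)=f(i+2n+6,i+k+2n+5)$ for all $i\in\mathbb{Z}$.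
   Context: For a nonzero $c\in K$, the $c$-continuant polynomials $P_k=P_k^c$ ($k\ge -1$) are defined by $P_{-1}=0$, $P_0=1$ and, for $k\ge1$, $P_k(x_1,\dots,x_k)=x_kP_{k-1}(x_1,\dots,x_{k-1})+cP_{k-2}(x_1,\dots,x_{k-2})$. A family $(x_i)_{i\in\mathbb{Z}}$ of elements of $K$ is $n$-admissible if $P_{n+2}(x_i,\dots,x_{i+n+1})=0$ for all $i\in\mathbb{Z}$. Let $\mathbb{B}_n=\{(i,j)\in\mathbb{Z}^2:-2\le j-i\le n+1\}$. A $c$-frieze of order $n$ is a function $f:\mathbb{B}_n\to K$ for which there is an $n$-admissible family $(x_i)$ with $f(i,j)=P_{j-i+1}(x_i,\dots,x_j)$ for all $(i,j)\in\mathbb{B}_n$ (so $f(i,i-2)=0$, $f(i,i-1)=1$, $f(i,i)=x_i$). For $-1\le k\le n+2$, row $k$ of $f$ consists of the values $f(i,i+k-1)$, $i\in\mathbb{Z}$. It is known that $st=(-c)^{n+1}$, so $s,t\neq0$. *)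

(* Defs.v *)
From mathcomp Require Import all_boot all_order all_algebra.
Set Implicit Arguments. Unset Strict Implicit. Unset Printing Implicit Defensive.
Import Order.TTheory GRing.Theory Num.Theory.
Local Open Scope ring_scope.

(* Continuants on the reversed list: contQ c [:: x_k; ...; x_1] = P_k(x_1,...,x_k). *)
Fixpoint contQ (K : fieldType) (c : K) (s : seq K) : K :=
  match s with
  | [::] => 1
  | x :: r =>
    match r with
    | [::] => x
    | _ :: r' => x * contQ c r + c * contQ c r'
    end
  end.

Definition contP (K : fieldType) (c : K) (s : seq K) : K := contQ c (rev s).

Definition window (K : fieldType) (x : int -> K) (i : int) (m : nat) : seq K :=
  mkseq (fun k => x (i + k%:Z)) m.

Definition admissible (K : fieldType) (c : K) (n : nat) (x : int -> K) : Prop :=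
  forall i : int, contP c (window x i n.+2) = 0.

Definition frieze_val (K : fieldType) (c : K) (x : int -> K) (i j : int) : K :=
  if (j - i + 1 < 0) then 0 else contP c (window x i (absz (j - i + 1))).

(* f : Z x Z -> K is a c-frieze of order n (only its values on B_n matter). *)
Definition is_frieze (K : fieldType) (c : K) (n : nat) (f : int -> int -> K) : Prop :=
  exists x : int -> K, admissible c n x /\
    forall i j : int, -2 <= j - i <= n%:Z + 1 -> f i j = frieze_val c x i j.

(* Main.v *)
Require Import Defs.
From mathcomp Require Import all_boot all_order all_algebra.
From mathcomp Require Import zify ring.
Set Implicit Arguments. Unset Strict Implicit.
Import Order.TTheory GRing.Theory Num.Theory.
Local Open Scope ring_scope.

Section Cont.
Variables (K : fieldType) (c : K) (x : int -> K).
Definition F (i : int) (l : nat) := contP c (window x i l).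

Lemma F0 i : F i 0 = 1. Proof. by []. Qed.
Lemma F1 i : F i 1 = x i. Proof. by rewrite /F /contP /window /= addr0. Qed.

Lemma Frec i l : F i l.+2 = x (i + l.+1%:Z) * F i l.+1 + c * F i l.
Proof.
rewrite /F /contP /window.
set f := (fun k : nat => x (i + k%:Z)).
rewrite [mkseq f l.+2]mkseqS rev_rcons [mkseq f l.+1]mkseqS rev_rcons /=.
by [].
Qed.

Lemma shiftz (i : int) (a b : nat) : i + a%:Z + b%:Z = i + (a + b)%N%:Z.
Proof. lia. Qed.

Lemma Fleft l : forall i, F i l.+2 = x i * F (i+1) l.+1 + c * F (i+2) l.
Proof.
elim: l {-2}l (leqnn l) => [|L IH] l Hl i.
  move: Hl; rewrite leqn0 => /eqP ->.
  rewrite Frec !F1 !F0 mulr1 mulrC; congr (_ * _ + _); congr x; lia.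
case: l Hl => [|l] Hl; first by apply: IH.
case: l Hl => [|l] Hl.
  rewrite Frec Frec (Frec (i+1)) !F1 !F0.
  have -> : i + 1 + (1%N)%:Z = i + (2%N)%:Z by lia.
  have -> : i + (1%N)%:Z = i + 1 by lia.
  have -> : i + 2 = i + (2%N)%:Z by lia.
  ring.
have H1 := IH l.+1 (ltnSE Hl) i.
have H2 := IH l (leq_trans (leqnSn l) (ltnSE Hl)) i.
rewrite (Frec i l.+2) H1 H2 (Frec (i+1) l.+1) (Frec (i+2) l).
have -> : i + 1 + (l.+2)%:Z = i + (l.+3)%:Z by lia.
have -> : i + 2 + (l.+1)%:Z = i + (l.+3)%:Z by lia.
ring.
Qed.

Lemma Fdet l : forall i, F i l.+2 * F (i+1) l - F (i+1) l.+1 * F i l.+1 = - (- c) ^+ l.+1.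
Proof.
elim: l => [|l IH] i.
  rewrite Frec !F1 !F0 exprS expr0.
  have -> : i + (1%N)%:Z = i + 1 by lia.
  ring.
rewrite Frec (Frec (i+1) l).
have -> : i + 1 + (l.+1)%:Z = i + (l.+2)%:Z by lia.
have H := IH i.
rewrite exprS.
transitivity (- c * (F i l.+2 * F (i + 1) l - F (i + 1) l.+1 * F i l.+1)); first ring.
rewrite H; ring.
Qed.

End Cont.


Lemma Fscale (K : fieldType) (c : K) (x y : int -> K) (i j : int) (r : K) :
  r != 0 -> (forall m : nat, y (i + m%:Z) = (if odd m then r^-1 else r) * x (j + m%:Z)) ->
  forall l, F c y i l = (if odd l then r else 1) * F c x j l.
Proof.
move=> r0 Hy.
suff H : forall l, F c y i l = (if odd l then r else 1) * F c x j l /\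
                  F c y i l.+1 = (if odd l.+1 then r else 1) * F c x j l.+1.
  by move=> l; case: (H l).
elim=> [|l [IH1 IH2]].
  by rewrite !F0 !F1 mul1r; split=> //; have := Hy 0%N; rewrite !addr0.
split=> //.
rewrite Frec Frec IH1 IH2 Hy /=.
case: (odd l) => /=.
  rewrite mul1r; ring.
rewrite mul1r; field; done.
Qed.

Section Frieze.
Variables (K : fieldType) (c : K) (n : nat) (x : int -> K).
Hypothesis c0 : c != 0.
Hypothesis adm : admissible c n x.
Let a i := F c x i n.+1.

Lemma adm0 i : F c x i n.+2 = 0. Proof. exact: adm. Qed.

Lemma Ldet i : a i * a (i+1) = (- c) ^+ n.+1.
Proof.
have := Fdet c x n i; rewrite adm0 mul0r sub0r => /eqP; rewrite eqr_opp => /eqP.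
by rewrite /a mulrC.
Qed.

Lemma anz i : a i != 0.
Proof.
apply/negP => /eqP H; have := Ldet i; rewrite H mul0r => /eqP.
by rewrite eq_sym expf_eq0 oppr_eq0 (negPf c0) andbF.
Qed.

Lemma Lper i : a (i + 2) = a i.
Proof.
have H1 := Ldet i; have H2 := Ldet (i+1).
have -> : i + 2 = i + 1 + 1 by lia.
apply: (mulfI (anz (i+1))); rewrite H2 mulrC H1 //.
Qed.

Lemma Lper2 z : forall i, a (i + 2 * z) = a i.
Proof.
elim/int_rect: z => [|m IH|m IH] i.
- by rewrite mulr0 addr0.
- have -> : i + 2 * (m.+1)%:Z = (i + 2 * m%:Z) + 2 by lia.
  by rewrite Lper IH.
- rewrite -(IH i); rewrite -Lper; congr a; lia.
Qed.

Lemma Lx i : x (i + n%:Z + 3) * a i = a (i+1) * x i.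
Proof.
have H1 := Frec c x (i+2) n; rewrite adm0 in H1.
have H2 := Fleft c x n i; rewrite adm0 in H2.
have -> : i + n%:Z + 3 = i + 2 + (n.+1)%:Z by lia.
rewrite -(Lper i) /a.
have -> : i + 2 = i + 1 + 1 by lia.
have -> : i + 1 + 1 + (n.+1)%:Z = i + 2 + (n.+1)%:Z by lia.
have -> : i + 1 + 1 = i + 2 by lia.
apply/eqP; rewrite -subr_eq0; apply/eqP.
transitivity ((x (i + 2 + (n.+1)%:Z) * F c x (i + 2) n.+1 + c * F c x (i + 2) n) -
   (x i * F c x (i + 1) n.+1 + c * F c x (i + 2) n)); first ring.
by rewrite -H1 -H2 subrr.
Qed.

Lemma Ltrans i l : F c x (i + n%:Z + 3) l = (if odd l then a (i+1) / a i else 1) * F c x i l.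
Proof.
have r0 : a (i + 1) / a i != 0 by rewrite mulf_neq0 ?invr_eq0 ?anz.
rewrite (@Fscale K c (fun z => x z) x _ i _ r0) //.
move=> m.
have Hm := Lx (i + m%:Z).
have -> : i + n%:Z + 3 + m%:Z = i + m%:Z + n%:Z + 3 by lia.
apply: (mulIf (anz (i + m%:Z))).
rewrite Hm -mulrA [x _ * _]mulrC mulrA; congr (_ * _).
have Hmd : (m = odd m + m./2 * 2)%N by rewrite muln2 odd_double_half.
set h := m./2 in Hmd *.
case: (odd m) Hmd => /= Hmd.
- have -> : i + m%:Z = (i + 1) + 2 * h%:Z by lia.
  have -> : i + 1 + 2 * h%:Z + 1 = i + 2 * (h + 1)%N%:Z by lia.
  rewrite !Lper2; field; rewrite !anz //.
- have -> : i + m%:Z = i + 2 * h%:Z by lia.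
  have -> : i + 2 * h%:Z + 1 = (i + 1) + 2 * h%:Z by lia.
  rewrite !Lper2; field; rewrite !anz //.
Qed.

End Frieze.

Theorem mainTheorem1 (K : fieldType) (c : K) (n : nat) (f : int -> int -> K)
  (k : int) :
  c != 0 -> (1 <= n)%N -> is_frieze c n f ->
  -1 <= k <= n%:Z + 2 ->
  let s := f 0 n%:Z in
  let t := f 1 (n%:Z + 1) in
  (~~ odd (absz k) ->
     forall i : int,
       f (2 * i) (2 * i + k - 1) = f (2 * i + n%:Z + 3) (2 * i + k + n%:Z + 2) /\
       f (2 * i + 1) (2 * i + k) = f (2 * i + n%:Z + 4) (2 * i + k + n%:Z + 3)) /\
  (odd (absz k) ->
     forall i : int,
       f (2 * i) (2 * i + k - 1) =
         (- c) ^+ n.+1 / t ^+ 2 * f (2 * i + n%:Z + 3) (2 * i + k + n%:Z + 2) /\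
       f (2 * i + 1) (2 * i + k) =
         (- c) ^+ n.+1 / s ^+ 2 * f (2 * i + n%:Z + 4) (2 * i + k + n%:Z + 3)) /\
  (odd (absz k) -> ~~ odd n ->
     forall i : int,
       f i (i + k - 1) = f (i + 2 * n%:Z + 6) (i + k + 2 * n%:Z + 5)).
Proof.
move=> c0 n1 [x [adm Hfx]] /andP [k1 k2] s t.
have Hv : forall p q l, (l <= n.+2)%N -> q - p + 1 = l%:Z -> f p q = F c x p l.
  move=> p q l hl E; rewrite Hfx; last by apply/andP; split; lia.
  by rewrite /frieze_val E.
have Hs : s = F c x 0 n.+1 by apply: Hv =>//; lia.
have Ht : t = F c x 1 n.+1 by apply: Hv =>//; lia.
have Hrow : forall p q, q = p + k - 1 -> f p q = (if k < 0 then 0 else F c x p `|k|%N).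
  move=> p q E; rewrite Hfx; last by apply/andP; split; lia.
  rewrite /frieze_val; have -> : q - p + 1 = k by lia.
  by [].
have Hdet := Ldet adm 0.
have anz := anz c0 adm.
have Lp := Lper2 c0 adm.
have Tr := Ltrans c0 adm.
rewrite -Hs in Hdet; rewrite (_ : 0 + 1 = 1) // -Ht in Hdet.
have sn : s != 0 by rewrite Hs; apply: anz.
have tn : t != 0 by rewrite Ht -(add0r 1); apply: anz.
have E2 : forall i : int, F c x (2 * i) n.+1 = s by move=> i; rewrite Hs -(Lp i 0) add0r.
have E3 : forall i : int, F c x (2 * i + 1) n.+1 = t.
  by move=> i; rewrite Ht -(Lp i 1) addrC.
split; [|split].
- move=> ev i.
  rewrite (Hrow (2*i)) // (Hrow (2*i+n%:Z+3)); last lia.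
  rewrite (Hrow (2*i+1)); last lia.
  rewrite (Hrow (2*i+n%:Z+4)); last lia.
  case: ifP => // _.
  have -> : 2 * i + n%:Z + 4 = (2 * i + 1) + n%:Z + 3 by lia.
  by rewrite !Tr (negPf ev) !mul1r.
- move=> od i.
  rewrite (Hrow (2*i)) // (Hrow (2*i+n%:Z+3)); last lia.
  rewrite (Hrow (2*i+1)); last lia.
  rewrite (Hrow (2*i+n%:Z+4)); last lia.
  case: ifP => _; first by rewrite !mulr0.
  have -> : 2 * i + n%:Z + 4 = (2 * i + 1) + n%:Z + 3 by lia.
  rewrite !Tr od E2 E3.
  have -> : 2 * i + 1 + 1 = 2 * (i + 1) by lia.
  rewrite E2 -Hdet; split; field; rewrite ?sn ?tn //.
- move=> od ev i.
  rewrite (Hrow i) // (Hrow (i + 2 * n%:Z + 6)); last lia.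
  case: ifP => _; first by split; rewrite mulr0.
  have -> : i + 2 * n%:Z + 6 = (i + n%:Z + 3) + n%:Z + 3 by lia.
  set l := `|k|%N; rewrite (Tr (i + n%:Z + 3) l) (Tr i l) od mulrA.
  have Hmd : (n = odd n + n./2 * 2)%N by rewrite muln2 odd_double_half.
  set h := n./2 in Hmd; rewrite (negPf ev) /= in Hmd.
  have -> : i + n%:Z + 3 + 1 = i + 2 * (h + 2)%N%:Z by lia.
  have -> : i + n%:Z + 3 = (i + 1) + 2 * (h + 1)%N%:Z by lia.
  rewrite !Lp; have := anz i; have := anz (i + 1) => h1 h2.
  rewrite -[LHS]mul1r; congr (_ * _); field; rewrite h1 h2 //.
Qed.
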